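(* Let $D$ be a finite directed graph (parallel directed edges allowed, no loops) with nonempty vertex set $V$, in which every pair of adjacent vertices is joined by at least two directed edges (not necessarily in the same direction). Let $w:V\to\mathbb{N}^+$, and write $W=w[V]$ and $K=\alpha_w(D)$. Then $$\sum_{xy\in E(D)} w(x)\ \ge\ \frac{W^2}{K}-W,$$ where the sum runs over all directed edges $xy$ (directed from $x$ to $y$), counted with multiplicity.
   Context: For a function $f$ on a set $T$, $f[T]=\sum_{t\in T}f(t)$. Two vertices are adjacent if there is at least one directed edge between them (in either direction). $\alpha_w(D)$ is the maximum of $w[I]$ over all sets $I\subseteq V$ of pairwise non-adjacent vertices. *)

(* Defs.v *)
From mathcomp Require Import all_boot all_order all_algebra.
Set Implicit Arguments. Unset Strict Implicit. Unset Printing Implicit Defensive.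

(* A finite directed multigraph on vertex type V is given by its edge
   multiplicity function  m : V -> V -> nat,  m x y = number of directed
   edges from x to y.  Loopless means m x x = 0. *)

Definition loopless (V : finType) (m : V -> V -> nat) : Prop :=
  forall x : V, m x x = 0%N.

Definition adjacent (V : finType) (m : V -> V -> nat) (x y : V) : bool :=
  (0 < m x y + m y x)%N.

Definition stable (V : finType) (m : V -> V -> nat) (I : {set V}) : bool :=
  [forall x in I, forall y in I, ~~ adjacent m x y].

Definition wsum (V : finType) (w : V -> nat) (T : {set V}) : nat :=
  (\sum_(t in T) w t)%N.

Definition alpha_w (V : finType) (m : V -> V -> nat) (w : V -> nat) : nat :=
  (\max_(I : {set V} | stable m I) wsum w I)%N.

(* Main.v *)
Require Import Defs.
From mathcomp Require Import all_boot all_order all_algebra.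
From mathcomp Require Import zify.
Import GRing.Theory Num.Theory.
Set Implicit Arguments. Unset Strict Implicit.

Lemma adj_sym (V : finType) (m : V -> V -> nat) x y :
  adjacent m x y = adjacent m y x.
Proof. by rewrite /adjacent addnC. Qed.

Lemma adj_irr (V : finType) (m : V -> V -> nat) (hloop : loopless m) x :
  adjacent m x x = false.
Proof. by rewrite /adjacent hloop. Qed.

Lemma coloring_ex (V : finType) (m : V -> V -> nat) (w : V -> nat)
  (hloop : loopless m) :
  forall n (U : {set V}), #|U| = n -> exists c : V -> nat,
   (forall x y, x \in U -> y \in U -> adjacent m x y -> c x != c y) /\
   (forall x, x \in U -> forall k, k < c x ->
      exists y, [&& y \in U, adjacent m x y, c y == k & w x <= w y]).
Proof.
elim=> [|n IH] U hU.
  exists (fun _ => 0); move/cards0_eq: hU => ->.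
  by split=> x; rewrite in_set0.
have [x0 hx0] : exists x0, x0 \in U by apply/card_gt0P; rewrite hU.
case: (arg_minnP w hx0) => x hxU0 hxmin.
have hxU : x \in U := hxU0.
have hU' : #|U :\ x| = n by move: hU; rewrite (cardsD1 x U) hxU add1n => -[].
have [c' [hprop hwit]] := IH _ hU'.
pose s := [seq c' y | y <- enum V & (y \in U :\ x) && adjacent m x y].
have exk : exists k, k \notin s.
  have : ~~ all (fun k => k \in s) (iota 0 (size s).+1).
    apply/negP => /allP hall.
    have := uniq_leq_size (iota_uniq 0 (size s).+1) hall.
    by rewrite size_iota ltnn.
  by case/allPn => k _ hk; exists k.
case: (ex_minnP exk) => k hk hkmin.
exists (fun y => if y == x then k else c' y); split.
- move=> a b ha hb hab.
  case: (eqVneq a x) => [ea|nea]; case: (eqVneq b x) => [eb|neb].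
  + by move: hab; rewrite ea eb adj_irr.
  + subst a; apply/eqP => ekb; move: hk; rewrite ekb; apply/negP/negPn.
    apply/mapP; exists b => //; rewrite mem_filter mem_enum andbT.
    by rewrite hab in_setD1 neb hb.
  + subst b; apply/eqP => ekb; move: hk; rewrite -ekb; apply/negP/negPn.
    apply/mapP; exists a => //; rewrite mem_filter mem_enum andbT.
    by rewrite adj_sym hab in_setD1 nea ha.
  + by apply: hprop => //; rewrite in_setD1 ?nea ?neb.
- move=> a ha j; case: (eqVneq a x) => [ea|nea] hj.
  + have : j \in s by apply/negPn/negP => hjs; move: (hkmin j hjs); rewrite leqNgt hj.
    case/mapP => y; rewrite mem_filter mem_enum andbT => /andP[hyU hxy] ->.
    move: hyU; rewrite in_setD1 => /andP[nyx hyU].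
    exists y; rewrite hyU ea hxy (negbTE nyx) eqxx /=.
    exact: hxmin.
  + have ha' : a \in U :\ x by rewrite in_setD1 nea.
    case: (hwit a ha' j hj) => y /and4P[hyU hay hcy hw].
    move: hyU; rewrite in_setD1 => /andP[nyx hyU].
    by exists y; rewrite hyU hay (negbTE nyx) hcy hw.
Qed.

Lemma class_le (V : finType) (m : V -> V -> nat) (w : V -> nat) (c : V -> nat)
  (hprop : forall x y, adjacent m x y -> c x != c y) k :
  \sum_(y | c y == k) w y <= alpha_w m w.
Proof.
have st : stable m [set y | c y == k].
  apply/forallP => x; apply/implyP; rewrite inE => hx.
  apply/forallP => y; apply/implyP; rewrite inE => hy.
  apply/negP => hxy; move: (hprop _ _ hxy); by rewrite (eqP hx) (eqP hy) eqxx.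
have := @leq_bigmax_cond _ (stable m) (wsum w) _ st.
by rewrite /wsum (eq_bigl (fun y => c y == k)) // => y; rewrite inE.
Qed.

Lemma lt_le (V : finType) (m : V -> V -> nat) (w : V -> nat) (c : V -> nat)
  (hprop : forall x y, adjacent m x y -> c x != c y) n :
  \sum_(y | c y < n) w y <= n * alpha_w m w.
Proof.
elim: n => [|n IH]; first by rewrite big_pred0 // => y.
rewrite (bigID (fun y => c y < n)) /= mulSnr.
rewrite (eq_bigl (fun y => c y < n)); last first.
  by move=> y; rewrite andbC; case h: (c y < n) => //=; lia.
rewrite [X in _ + X](eq_bigl (fun y => c y == n)); last first.
  by move=> y; rewrite ltnS -leqNgt; case: ltngtP.
by apply: leq_add => //; apply: class_le.
Qed.

Lemma wit_count (V : finType) (m : V -> V -> nat) (w : V -> nat) (c : V -> nat)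
  (hwit : forall x k, k < c x ->
      exists y, [&& adjacent m x y, c y == k & w x <= w y]) x :
  forall n, n <= c x ->
  n <= #|[set y | [&& adjacent m x y, c y < n & w x <= w y]]|.
Proof.
elim=> [|n IH] hn //.
have := IH (ltnW hn).
case: (hwit x n hn) => y /and3P[hxy hcy hw] hle.
apply: (leq_ltn_trans hle); apply: proper_card; apply/properP; split.
  apply/subsetP => z; rewrite !inE => /and3P[-> hz ->] /=; lia.
exists y; rewrite !inE hxy hw (eqP hcy) /=; lia.
Qed.

Lemma main_nat (V : finType) (m : V -> V -> nat) (w : V -> nat)
  (hloop : loopless m)
  (hdouble : forall x y : V, adjacent m x y -> (2 <= m x y + m y x)%N) :
  (\sum_x w x) * (\sum_x w x) <=
   alpha_w m w * (\sum_x w x + \sum_(x : V) \sum_(y : V) m x y * w x).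
Proof.
have [c [hp hw]] := coloring_ex w hloop (erefl #|[set: V]|).
have hprop : forall x y, adjacent m x y -> c x != c y.
  by move=> x y; apply: hp; rewrite in_setT.
have hwit : forall x k, k < c x ->
      exists y, [&& adjacent m x y, c y == k & w x <= w y].
  move=> x k hk; case: (hw x (in_setT x) k hk) => y /and4P[_ h1 h2 h3].
  by exists y; rewrite h1 h2 h3.
set K := alpha_w m w.
set C := \sum_x w x * c x.
have hA : (\sum_x w x) * (\sum_x w x) <= K * (\sum_x w x) + 2 * (K * C).
  have e1 : (\sum_x w x) * (\sum_x w x) =
     \sum_x \sum_y (if c y == c x then w x * w y else 0)
   + \sum_x \sum_y (if c y < c x then w x * w y else 0)
   + \sum_x \sum_y (if c x < c y then w x * w y else 0).
    rewrite big_distrl -!big_split /=; apply: eq_bigr => x _.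
    rewrite big_distrr -!big_split /=; apply: eq_bigr => y _.
    by case: ltngtP => _; rewrite ?addn0 ?add0n.
  have e2 : \sum_x \sum_y (if c x < c y then w x * w y else 0) =
            \sum_x \sum_y (if c y < c x then w x * w y else 0).
    rewrite exchange_big /=; apply: eq_bigr => x _; apply: eq_bigr => y _.
    by rewrite mulnC.
  rewrite e1 e2 -addnA addnn -mul2n; apply: leq_add.
    rewrite mulnC big_distrl /=; apply: leq_sum => x _.
    rewrite -big_mkcond /= -big_distrr /= leq_mul2l; apply/orP; right.
    apply: class_le => //.
  rewrite leq_mul2l /=; rewrite /C big_distrr /=; apply: leq_sum => x _.
  rewrite -big_mkcond /= -big_distrr /= mulnCA leq_mul2l; apply/orP; right.
  by rewrite mulnC; apply: lt_le.
have hB : 2 * C <= \sum_(x : V) \sum_(y : V) m x y * w x.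
  have b1 : 2 * C <= \sum_x \sum_y
      (if c y < c x then m x y * w x + m y x * w y else 0).
    rewrite /C big_distrr /=; apply: leq_sum => x _.
    have hc := wit_count hwit (leqnn (c x)).
    apply: (@leq_trans (2 * \sum_(y in [set y | [&& adjacent m x y, c y < c x & w x <= w y]]) w x)).
      by rewrite sum_nat_const leq_mul2l [#|_| * _]mulnC leq_mul2l hc !orbT.
    rewrite big_distrr big_mkcond /=; apply: leq_sum => y _.
    rewrite inE; case: (boolP [&& _, _ & _]) => // /and3P[hxy -> hwxy].
    have := hdouble _ _ hxy; nia.
  apply: (leq_trans b1).
  have e3 : \sum_x \sum_y (if c y < c x then m x y * w x + m y x * w y else 0)
     = \sum_x \sum_y (if c y < c x then m x y * w x else 0)
     + \sum_x \sum_y (if c x < c y then m x y * w x else 0).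
    rewrite [X in _ = _ + X]exchange_big -big_split /=; apply: eq_bigr => x _.
    rewrite -big_split /=; apply: eq_bigr => y _.
    by case: ifP; rewrite ?addn0.
  rewrite e3 -big_split /=; apply: leq_sum => x _.
  rewrite -big_split /=; apply: leq_sum => y _.
  by case: ltngtP; rewrite ?addn0 ?add0n.
rewrite mulnDr; apply: (leq_trans hA); rewrite leq_add2l.
rewrite mulnCA leq_mul2l hB orbT //.
Qed.

Local Open Scope ring_scope.

Theorem theorem3p2 (V : finType) (m : V -> V -> nat) (w : V -> nat)
  (hV : (0 < #|V|)%N)
  (hloop : loopless m)
  (hdouble : forall x y : V, adjacent m x y -> (2 <= m x y + m y x)%N)
  (hw : forall x : V, (0 < w x)%N) :
  let W := wsum w [set: V] in
  let K := alpha_w m w in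
  (W%:R ^+ 2) / K%:R - W%:R
    <= ((\sum_(x : V) \sum_(y : V) m x y * w x)%N)%:R :> rat.
Proof.
cbv zeta; set W := wsum w [set: V]; set K := alpha_w m w.
have hW : W = (\sum_x w x)%N by rewrite /W /wsum; apply: eq_bigl => x; rewrite in_setT.
have hK : (0 < K)%N.
  have [x0 _] : exists x0 : V, x0 \in [set: V] by apply/card_gt0P; rewrite cardsT.
  have st : stable m [set x0].
    apply/forallP => x; apply/implyP; rewrite inE => /eqP ->.
    apply/forallP => y; apply/implyP; rewrite inE => /eqP ->.
    by rewrite (adj_irr hloop).
  have := @leq_bigmax_cond _ (stable m) (wsum w) _ st.
  rewrite /wsum big_set1 => h; apply: leq_trans h; exact: hw.
have := main_nat w hloop hdouble; rewrite -hW -/K => hmain.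
rewrite lerBlDr ler_pdivrMr ?ltr0n // -natrX -natrD -natrM ler_nat.
rewrite -mulnn mulnC addnC; exact: hmain.
Qed.
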